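(* Assume Case 3 holds. Let $\mathcal{I}_f=[\alpha,l_2]$ if $\gamma>0$ and $\mathcal{I}_f=(0,l_2]$ if $\gamma=0$. Then for every $n\ge1$, $Q^n$ contains the term $z^{\gamma_n}w^{d^n}$, and for every $l\in\mathcal{I}_f$, $$w_l(Q^n)=w_l(z^{\gamma_n}w^{d^n})=\gamma_n+l\,d^n.$$
   Context: Let $f(z,w)=(p(z),q(z,w))$ be a holomorphic skew product germ at the origin of $\mathbb{C}^2$ with $f(0,0)=(0,0)$, where $p(z)=a_\delta z^\delta+O(z^{\delta+1})$ with $a_\delta\neq0$ and integer $\delta\ge1$, and $q(z,w)=\sum_{i+j\ge1}b_{ij}z^iw^j$ is not identically zero. For $n\ge1$ write $f^n=(p^n,Q^n)$. For a nonzero germ $g=\sum g_{ij}z^iw^j$, say $g$ contains $z^aw^b$ if $g_{ab}\neq0$, and for real $l>0$ let $w_l(g)=\min\{i+lj: g_{ij}\neq0\}$. The Newton polygon $N(g)$ is the convex hull of $\bigcup_{g_{ij}\neq0}\{(x,y):x\ge i,\ y\ge j\}$. Let $(n_1,m_1),\dots,(n_s,m_s)$ be the vertices of $N(q)$ with $n_1<\cdots<n_s$, $m_1>\cdots>m_s$; for $1\le k\le s-1$ let $T_k$ be the $y$-intercept of the line through $(n_k,m_k)$ and $(n_{k+1},m_{k+1})$. Case 3 means: $s>1$ and $T_1\le\delta$; set $(\gamma,d)=(n_1,m_1)$ and $l_2=\frac{n_2-n_1}{m_1-m_2}$ (then $\delta\ge d>0$, and $\delta>d$ if $\gamma>0$).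 Define $\gamma_n=\gamma(\delta^{n-1}+\delta^{n-2}d+\cdots+d^{n-1})$ and $\alpha=\gamma/(\delta-d)$ when $\delta\neq d$. *)

(* Defs.v *)
From HB Require Import structures.
From mathcomp Require Import all_boot all_order all_algebra.
From mathcomp Require Import reals.
From mathcomp Require Import complex.
Set Implicit Arguments. Unset Strict Implicit. Unset Printing Implicit Defensive.
Import Order.TTheory GRing.Theory Num.Theory.
Local Open Scope ring_scope.

Section Defs.
Variable R : realType.
Local Notation C := R[i].

Definition ser1 := nat -> C.
(* A formal power series in (z,w): s a b = coefficient of z^a w^b. *)
Definition ser2 := nat -> nat -> C.

Definition one2 : ser2 := fun a b => ((a == 0%N) && (b == 0%N))%:R.
Definition mul2 (s t : ser2) : ser2 := fun a b =>
  \sum_(i < a.+1) \sum_(j < b.+1) s i j * t (a - i)%N (b - j)%N.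
Definition pow2 (s : ser2) (k : nat) : ser2 := iter k (mul2 s) one2.
Definition lift1 (u : ser1) : ser2 := fun a b => if b == 0%N then u a else 0.

(* Formal composition g(u(z)) for u without constant term. *)
Definition comp1 (g u : ser1) : ser1 := fun a =>
  \sum_(i < a.+1) g i * pow2 (lift1 u) i a 0%N.
(* Formal composition g(u(z), v(z,w)) for u, v without constant term
   (terms with i + j > a + b cannot contribute to the coefficient of z^a w^b). *)
Definition comp2 (g : ser2) (u : ser1) (v : ser2) : ser2 := fun a b =>
  \sum_(i < (a + b).+1) \sum_(j < (a + b).+1)
     g i j * mul2 (pow2 (lift1 u) i) (pow2 v j) a b.

(* iterates of the skew product f = (p, q):  f^n = (p^n, Q^n),
   f^(n+1) = f o f^n, i.e. p^(n+1) = p(p^n), Q^(n+1) = q(p^n(z), Q^n(z,w)). *)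
Fixpoint piter (p : ser1) (n : nat) : ser1 :=
  match n with
  | 0 => fun a => (a == 1%N)%:R
  | n'.+1 => comp1 p (piter p n')
  end.
Fixpoint Qiter (p : ser1) (q : ser2) (n : nat) : ser2 :=
  match n with
  | 0 => fun a b => ((a == 0%N) && (b == 1%N))%:R
  | n'.+1 => comp2 q (piter p n') (Qiter p q n')
  end.

(* holomorphic germs = power series with positive radius of convergence *)
Definition holo1 (p : ser1) : Prop :=
  exists M rho : R, forall i, `|p i| <= ((M * rho ^+ i)%:C)%C.
Definition holo2 (q : ser2) : Prop :=
  exists M rho : R, forall i j, `|q i j| <= ((M * rho ^+ (i + j))%:C)%C.

Definition monom (a b : nat) : ser2 := fun i j => ((i == a) && (j == b))%:R.

Definition wl_is (g : ser2) (l v : R) : Prop :=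
  (exists i j, g i j != 0 /\ i%:R + l * j%:R = v) /\
  (forall i j, g i j != 0 -> v <= i%:R + l * j%:R).

(* Newton polygon of g: convex hull of the union of the quadrants
   {(x,y) : x >= i, y >= j} over the support of g. *)
Definition quadrants (g : ser2) (P : R * R) : Prop :=
  exists i j, g i j != 0 /\ i%:R <= P.1 /\ j%:R <= P.2.
Definition newton_polygon (g : ser2) (P : R * R) : Prop :=
  exists (k : nat) (c : 'I_k -> R) (pt : 'I_k -> R * R),
    (forall t, 0 <= c t) /\ \sum_(t < k) c t = 1 /\
    (forall t, quadrants g (pt t)) /\
    P = (\sum_(t < k) c t * (pt t).1, \sum_(t < k) c t * (pt t).2).
Definition np_vertex (g : ser2) (P : R * R) : Prop :=
  newton_polygon g P /\
  forall (A B : R * R) (t : R), newton_polygon g A -> newton_polygon g B ->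
    0 < t < 1 -> P = (t * A.1 + (1 - t) * B.1, t * A.2 + (1 - t) * B.2) ->
    A = B.

Definition gamma_n (gamma delta d n : nat) : nat :=
  (gamma * \sum_(k < n) delta ^ (n.-1 - k) * d ^ k)%N.

End Defs.

(* Main.v *)
Require Import Defs.
From HB Require Import structures.
From mathcomp Require Import all_boot all_order all_algebra.
From mathcomp Require Import reals.
From mathcomp Require Import complex.
From mathcomp.algebra_tactics Require Import ring lra.
From mathcomp Require Import zify.
Import Order.TTheory GRing.Theory Num.Theory.
Local Open Scope ring_scope.
Set Implicit Arguments. Unset Strict Implicit. Unset Printing Implicit Defensive.

Section Ser.
Variable R : realType.
Local Notation C := R[i].

Definition wt (l : R) (i j : nat) : R := i%:R + l * j%:R.
Definition bnd (l v : R) (s : ser2 R) :=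
  forall i j, s i j != 0 -> v <= wt l i j.
Definition lead (l : R) (a b : nat) (s : ser2 R) :=
  s a b != 0 /\ forall i j, s i j != 0 -> (i != a) || (j != b) -> wt l a b < wt l i j.

Lemma wtD l i j i' j' : wt l (i + i') (j + j') = wt l i j + wt l i' j'.
Proof. rewrite /wt !natrD; ring. Qed.

Lemma wtB l a b i j : (i <= a)%N -> (j <= b)%N -> wt l i j + wt l (a - i) (b - j) = wt l a b.
Proof. by move=> Hi Hj; rewrite -wtD !subnKC. Qed.

Lemma sum_neq0 n (F : 'I_n -> C) : \sum_(i < n) F i != 0 -> exists i, F i != 0.
Proof.
case: (pickP (fun i => F i != 0)) => [i Hi|H0]; first by exists i.
by rewrite big1 ?eqxx // => i _; move/negbFE: (H0 i) => /eqP.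
Qed.

Lemma prod_neq0 (x y : C) : x * y != 0 -> x != 0 /\ y != 0.
Proof. by case: (eqVneq x 0) => [->|]; case: (eqVneq y 0) => [->|]; rewrite ?mulr0 ?mul0r ?eqxx. Qed.

Lemma sum1 N (F : nat -> C) i0 : (i0 < N)%N ->
  (forall i, (i < N)%N -> i != i0 -> F i = 0) -> \sum_(i < N) F i = F i0.
Proof.
move=> Hi H; rewrite (bigD1 (Ordinal Hi)) //= big1 ?addr0 // => i Hne.
apply: H => //; apply: contra Hne => /eqP Heq; apply/eqP/val_inj => /=; exact: Heq.
Qed.

Lemma dsum1 N M (F : nat -> nat -> C) i0 j0 : (i0 < N)%N -> (j0 < M)%N ->
  (forall i j, (i < N)%N -> (j < M)%N -> (i != i0) || (j != j0) -> F i j = 0) ->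
  \sum_(i < N) \sum_(j < M) F i j = F i0 j0.
Proof.
move=> Hi Hj H; rewrite (sum1 (F := fun i => \sum_(j < M) F i j) Hi).
  by apply: sum1 => // j Hj' Hne; apply: H => //; rewrite Hne orbT.
by move=> i Hi' Hne; rewrite big1 // => j _; apply: H => //; rewrite Hne.
Qed.

Lemma lead_bnd l a b s : lead l a b s -> bnd l (wt l a b) s.
Proof.
move=> [_ H] i j Hij; case: (boolP ((i != a) || (j != b))) => Hne.
  by apply/ltW/H.
by move: Hne; rewrite negb_or !negbK => /andP[/eqP -> /eqP ->].
Qed.

Lemma bnd_mul l v1 v2 s t : bnd l v1 s -> bnd l v2 t -> bnd l (v1 + v2) (mul2 s t).
Proof.
move=> Hs Ht a b /sum_neq0 [i /sum_neq0 [j /prod_neq0 [H1 H2]]].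
rewrite -(wtB l (ltnSE (ltn_ord i)) (ltnSE (ltn_ord j))).
by apply: lerD; [apply: Hs|apply: Ht].
Qed.

Lemma mul2_lead_coef l a1 b1 a2 b2 s t : lead l a1 b1 s -> lead l a2 b2 t ->
  mul2 s t (a1 + a2)%N (b1 + b2)%N = s a1 b1 * t a2 b2.
Proof.
move=> [Hs0 Hs] Ht; have Htb := lead_bnd Ht.
rewrite /mul2 (dsum1 (i0 := a1) (j0 := b1) (F := fun i j => s i j * t (a1 + a2 - i)%N (b1 + b2 - j)%N))
  ?addKn // ?ltnS ?leq_addr // => i j Hi Hj Hne.
case: (eqVneq (s i j) 0) => [->|Hsij]; first by rewrite mul0r.
case: (eqVneq (t (a1 + a2 - i)%N (b1 + b2 - j)%N) 0) => [->|Htij]; first by rewrite mulr0.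
have := Hs _ _ Hsij Hne; have := Htb _ _ Htij.
move: Hi Hj; rewrite !ltnS => Hi Hj.
have := wtB l Hi Hj; have := wtD l a1 b1 a2 b2 => E0 E1 E2 E3.
exfalso; lra.
Qed.

Lemma lead_mul l a1 b1 a2 b2 s t : lead l a1 b1 s -> lead l a2 b2 t ->
  lead l (a1 + a2) (b1 + b2) (mul2 s t).
Proof.
move=> Hs Ht; split; first by rewrite (mul2_lead_coef Hs Ht) mulf_neq0 //; [case: Hs|case: Ht].
move=> a b /sum_neq0 [i /sum_neq0 [j /prod_neq0 [H1 H2]]] Hne.
have Hi := ltnSE (ltn_ord i); have Hj := ltnSE (ltn_ord j).
rewrite -(wtB l Hi Hj) wtD.
case: (boolP (((i : nat) != a1) || ((j : nat) != b1))) => Hij.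
  have := (proj2 Hs) _ _ H1 Hij; have := lead_bnd Ht H2; lra.
move: Hij; rewrite negb_or !negbK => /andP[/eqP Ei /eqP Ej].
have Hne2 : ((a - i)%N != a2) || ((b - j)%N != b2).
  move: Hne; rewrite -Ei -Ej; apply: contraTT; rewrite negb_or !negbK.
  move=> /andP[/eqP <- /eqP <-]; by rewrite !subnKC ?eqxx.
have := (proj2 Ht) _ _ H2 Hne2; rewrite Ei Ej; lra.
Qed.

Lemma pow2S s k : @pow2 R s k.+1 = mul2 s (@pow2 R s k).
Proof. by []. Qed.

Lemma lead_one l : lead l 0 0 (one2 R).
Proof.
split; first by rewrite /one2 /= oner_neq0.
move=> i j; rewrite /one2; case: i; case: j => //=; by rewrite eqxx.
Qed.

Lemma lead_pow l a b s k : lead l a b s -> lead l (k * a) (k * b) (@pow2 R s k).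
Proof.
move=> Hs; elim: k => [|k IH]; first by rewrite !mul0n; exact: lead_one.
by rewrite pow2S !mulSn; apply: lead_mul.
Qed.

Lemma bnd_pow l v s k : bnd l v s -> bnd l (k%:R * v) (@pow2 R s k).
Proof.
move=> Hs; elim: k => [|k IH].
  rewrite mul0r; have := lead_bnd (lead_one l); by rewrite /wt mulr0 addr0.
rewrite pow2S -natr1 mulrDl mul1r addrC; exact: bnd_mul.
Qed.

Lemma lead_lift1 l (u : ser1 R) e : (forall i, (i < e)%N -> u i = 0) -> u e != 0 ->
  lead l e 0 (lift1 u).
Proof.
move=> H0 He; split; first by rewrite /lift1 eqxx.
move=> i j; rewrite /lift1; case: (eqVneq j 0%N) => [->|Hj]; last by rewrite eqxx.
rewrite ?eqxx /= ?orbF => Hu Hie; rewrite /wt ltrD2r ltr_nat ltn_neqAle eq_sym Hie /=.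
by rewrite leqNgt; apply/negP => /H0 /eqP; rewrite (negPf Hu).
Qed.

End Ser.

Section NP.
Variable R : realType.
Variable g : ser2 R.

Lemma np_quad Q : quadrants g Q -> newton_polygon g Q.
Proof.
move=> HQ; exists 1%N, (fun _ => 1), (fun _ => Q).
split; first by move=> _; exact: ler01.
split; first by rewrite big_ord1.
split=> //.
by rewrite !big_ord1; case: Q {HQ} => x y /=; rewrite !mul1r.
Qed.

Lemma np_lin (a b m : R) : 0 <= a -> 0 <= b ->
  (forall i j, g i j != 0 -> m <= a * i%:R + b * j%:R) ->
  forall P, newton_polygon g P -> m <= a * P.1 + b * P.2.
Proof.
move=> Ha Hb H P [k [c [pt [Hc [Hs [Hq ->]]]]]] /=.
rewrite !mulr_sumr -big_split /=.
rewrite -[m]mul1r -Hs mulr_suml; apply: ler_sum => t _.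
have [i [j [Hij [Hx Hy]]]] := Hq t.
have := H _ _ Hij => Hm.
have : a * i%:R <= a * (pt t).1 by apply: ler_wpM2l.
have : b * j%:R <= b * (pt t).2 by apply: ler_wpM2l.
move=> E1 E2.
have : m <= a * (pt t).1 + b * (pt t).2 by lra.
move=> E; rewrite mulrCA [b * _]mulrCA -mulrDr.
by apply: ler_wpM2l.
Qed.

Lemma np_face (a b m a' b' m' : R) : 0 <= a -> 0 <= b ->
  (forall i j, g i j != 0 -> m <= a * i%:R + b * j%:R) ->
  (forall Q, quadrants g Q -> a * Q.1 + b * Q.2 = m -> m' <= a' * Q.1 + b' * Q.2) ->
  forall P, newton_polygon g P -> a * P.1 + b * P.2 = m -> m' <= a' * P.1 + b' * P.2.
Proof.
move=> Ha Hb H H' P HP.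
have HPl := np_lin Ha Hb H HP.
move: HP => [k [c [pt [Hc [Hs [Hq ->]]]]]] /= HL.
have Hqm : forall t, m <= a * (pt t).1 + b * (pt t).2.
  move=> t; exact: (np_lin Ha Hb H (np_quad (Hq t))).
have Hz : \sum_(t < k) c t * (a * (pt t).1 + b * (pt t).2 - m) = 0.
  under eq_bigr => t _ do rewrite mulrDr mulrN.
  rewrite sumrB -mulr_suml Hs mul1r.
  have -> : \sum_(t < k) c t * (a * (pt t).1 + b * (pt t).2) =
     a * (\sum_(t < k) c t * (pt t).1) + b * (\sum_(t < k) c t * (pt t).2).
    by rewrite !mulr_sumr -big_split /=; apply: eq_bigr => t _; ring.
  by rewrite HL subrr.
have Hpos : forall t : 'I_k, true -> 0 <= c t * (a * (pt t).1 + b * (pt t).2 - m).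
  by move=> t _; apply: mulr_ge0 => //; rewrite subr_ge0.
have Hz2 := psumr_eq0P Hpos Hz.
rewrite !mulr_sumr -big_split /= -[m']mul1r -Hs mulr_suml; apply: ler_sum => t _.
have := Hz2 t isT; move/eqP; rewrite mulf_eq0; case/orP => [/eqP ->|]; first by rewrite !mul0r ?mulr0 ?addr0.
rewrite subr_eq0 => /eqP E.
have := H' _ (Hq t) E => E2.
rewrite mulrCA [b' * _]mulrCA -mulrDr.
by apply: ler_wpM2l.
Qed.


Lemma np_up P v1 v2 : newton_polygon g P -> 0 <= v1 -> 0 <= v2 ->
  newton_polygon g (P.1 + v1, P.2 + v2).
Proof.
move=> [k [c [pt [Hc [Hs [Hq ->]]]]]] H1 H2 /=.
exists k, c, (fun t => ((pt t).1 + v1, (pt t).2 + v2)); split=> //; split=> //; split.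
  move=> t; have [i [j [Hij [Hx Hy]]]] := Hq t; exists i, j; split=> //=.
  split; lra.
congr (_, _); rewrite /=; symmetry; under eq_bigr => t _ do rewrite mulrDr;
  by rewrite big_split /= -mulr_suml Hs mul1r.
Qed.

Lemma np_two A B s : quadrants g A -> quadrants g B -> 0 <= s <= 1 ->
  newton_polygon g (s * A.1 + (1 - s) * B.1, s * A.2 + (1 - s) * B.2).
Proof.
move=> HA HB /andP[Hs0 Hs1].
exists 2%N, (fun t : 'I_2 => if t == ord0 then s else 1 - s),
  (fun t : 'I_2 => if t == ord0 then A else B).
split; first by move=> t; case: ifP => _; lra.
split; first by rewrite big_ord_recl big_ord1 /=; ring.
split; first by move=> t; case: ifP.
by rewrite !big_ord_recl !big_ord0 /= !addr0.
Qed.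

Lemma vertex_le P Q : np_vertex g P -> newton_polygon g Q -> Q.1 <= P.1 -> Q.2 <= P.2 ->
  P = Q.
Proof.
move=> [HP Hv] HQ H1 H2.
have HB := np_up HQ (v1 := 2 * (P.1 - Q.1)) (v2 := 2 * (P.2 - Q.2)).
have E := Hv Q _ (2^-1) HQ (HB ltac:(lra) ltac:(lra)) ltac:(apply/andP; split; lra).
have : Q = (Q.1 + 2 * (P.1 - Q.1), Q.2 + 2 * (P.2 - Q.2)).
  apply: E; case: P {HP Hv H1 H2 HB} => x y /=; congr (_, _); field; by [].
case: P {HP Hv H1 H2 HB E} => x y; case: Q {HQ} => x' y' /= [E1 E2].
congr (_, _); lra.
Qed.

Lemma vertex_lex (a b m a' b' m' : R) P0 : 0 <= a -> 0 <= b ->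
  a * b' - a' * b != 0 ->
  (forall i j, g i j != 0 -> m <= a * i%:R + b * j%:R) ->
  (forall Q, quadrants g Q -> a * Q.1 + b * Q.2 = m -> m' <= a' * Q.1 + b' * Q.2) ->
  newton_polygon g P0 -> a * P0.1 + b * P0.2 = m -> a' * P0.1 + b' * P0.2 = m' ->
  np_vertex g P0.
Proof.
move=> Ha Hb Hdet H H' HP0 E1 E2; split=> // A B t HA HB /andP[Ht0 Ht1] EP.
rewrite EP /= in E1 E2.
have LA := np_lin Ha Hb H HA; have LB := np_lin Ha Hb H HB.
have EA : a * A.1 + b * A.2 = m.
  apply/eqP; rewrite eq_le LA andbT.
  have : t * (a * A.1 + b * A.2 - m) + (1 - t) * (a * B.1 + b * B.2 - m) = 0.
    rewrite -E1; ring.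
  move=> E; have : (1 - t) * (a * B.1 + b * B.2 - m) >= 0 by apply: mulr_ge0; lra.
  move=> E'; have : t * (a * A.1 + b * A.2 - m) <= 0 by lra.
  rewrite pmulr_rle0 //; lra.
have EB : a * B.1 + b * B.2 = m.
  have : t * (a * A.1 + b * A.2 - m) + (1 - t) * (a * B.1 + b * B.2 - m) = 0.
    rewrite -E1; ring.
  rewrite EA subrr mulr0 add0r => /eqP; rewrite mulf_eq0 subr_eq0; case/orP => /eqP; lra.
have LA' := np_face Ha Hb H H' HA EA; have LB' := np_face Ha Hb H H' HB EB.
have EA' : a' * A.1 + b' * A.2 = m'.
  apply/eqP; rewrite eq_le LA' andbT.
  have : t * (a' * A.1 + b' * A.2 - m') + (1 - t) * (a' * B.1 + b' * B.2 - m') = 0.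
    rewrite -E2; ring.
  move=> E; have : (1 - t) * (a' * B.1 + b' * B.2 - m') >= 0 by apply: mulr_ge0; lra.
  move=> E'; have : t * (a' * A.1 + b' * A.2 - m') <= 0 by lra.
  rewrite pmulr_rle0 //; lra.
have EB' : a' * B.1 + b' * B.2 = m'.
  have : t * (a' * A.1 + b' * A.2 - m') + (1 - t) * (a' * B.1 + b' * B.2 - m') = 0.
    rewrite -E2; ring.
  rewrite EA' subrr mulr0 add0r => /eqP; rewrite mulf_eq0 subr_eq0; case/orP => /eqP; lra.
case: A EA EA' {HA LA LA' EP E1 E2} => x y; case: B EB EB' {HB LB LB'} => x' y' /= F1 F2 F3 F4.
have X : (a * b' - a' * b) * (x - x') = 0.
  have -> : (a * b' - a' * b) * (x - x') = b' * ((a * x + b * y) - (a * x' + b * y'))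
      - b * ((a' * x + b' * y) - (a' * x' + b' * y')) by ring.
  by rewrite F1 F2 F3 F4 !subrr !mulr0 subr0.
have Y : (a * b' - a' * b) * (y - y') = 0.
  have -> : (a * b' - a' * b) * (y - y') = a * ((a' * x + b' * y) - (a' * x' + b' * y'))
      - a' * ((a * x + b * y) - (a * x' + b * y')) by ring.
  by rewrite F1 F2 F3 F4 !subrr !mulr0 subr0.
move/eqP: X; rewrite mulf_eq0 (negPf Hdet) /= subr_eq0 => /eqP ->.
move/eqP: Y; rewrite mulf_eq0 (negPf Hdet) /= subr_eq0 => /eqP ->.
by [].
Qed.
End NP.

From Stdlib Require Import Classical_Prop.

Lemma ex_min (P : nat -> Prop) : (exists n, P n) -> exists n, P n /\ forall m, P m -> (n <= m)%N.
Proof.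
move=> [n Hn]; apply: NNPP => Hno.
suff H : forall k m, (m <= k)%N -> ~ P m by exact: (H n n (leqnn n) Hn).
elim=> [|k IH] m Hm Pm.
- apply: Hno; exists m; split=> // m' _; rewrite leqn0 in Hm; by rewrite (eqP Hm).
- apply: Hno; exists m; split=> // m' Pm'; rewrite leqNgt; apply/negP => Hlt.
  apply: (IH m') => //; rewrite -ltnS; exact: leq_trans Hlt Hm.
Qed.

Lemma geom (R : realType) (q : ser2 R) (gamma d n2 m2 : nat) :
  (exists i j, q i j != 0) ->
  np_vertex q (gamma%:R, d%:R) ->
  (forall P, np_vertex q P -> gamma%:R <= P.1) ->
  np_vertex q (n2%:R, m2%:R) -> (gamma < n2)%N ->
  (forall P, np_vertex q P -> P <> (gamma%:R, d%:R) -> n2%:R <= P.1) ->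
  [/\ q gamma d != 0, (m2 < d)%N, (forall i j, q i j != 0 -> (gamma <= i)%N) &
     forall i j, q i j != 0 ->
       (d%:R - m2%:R) * gamma%:R + (n2%:R - gamma%:R) * d%:R <=
       (d%:R - m2%:R) * i%:R + (n2%:R - gamma%:R) * j%:R :> R].
Proof.
move=> [i1 [j1 Hq1]] Hv1 Hmin1 Hv2 Hlt Hmin2.
have [x0 [[y1 Hy1] Hx0]] := ex_min (P := fun x => exists j, q x j != 0) (ex_intro _ i1 (ex_intro _ j1 Hq1)).
have [y0 [Hy0 Hy0m]] := ex_min (P := fun y => q x0 y != 0) (ex_intro _ y1 Hy1).
have Hsupp1 : forall i j, q i j != 0 -> (x0 <= i)%N by move=> i j H; apply: Hx0; exists j.
have Hquad0 : quadrants q (x0%:R, y0%:R) by exists x0, y0.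
have Hb1 : forall i j, q i j != 0 -> (x0%:R : R) <= 1 * i%:R + 0 * j%:R.
  by move=> i j H; rewrite mul1r mul0r addr0 ler_nat; apply: Hsupp1 H.
have Hf1 : forall Q : R * R, quadrants q Q -> 1 * Q.1 + 0 * Q.2 = x0%:R -> (y0%:R : R) <= 0 * Q.1 + 1 * Q.2.
  move=> Q [i [j [Hij [Hx Hy]]]]; rewrite mul1r mul0r addr0 mul0r add0r mul1r => Ex.
  have Ei : i = x0.
    apply/eqP; rewrite eqn_leq (Hsupp1 _ _ Hij) andbT -(ler_nat R) -Ex; exact: Hx.
  apply: le_trans _ Hy; rewrite ler_nat; apply: Hy0m; rewrite -Ei //.
have Hv0 : np_vertex q (x0%:R, y0%:R).
  apply: (vertex_lex (a := 1) (b := 0) (a' := 0) (b' := 1)) Hb1 Hf1 (np_quad Hquad0) _ _ => //=.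
  - by rewrite mulr1 mulr0 subr0 oner_neq0.
  - by rewrite mul1r mul0r addr0.
  - by rewrite mul0r add0r mul1r.
have Eg : gamma = x0.
  have H1 := Hmin1 _ Hv0; rewrite /= ler_nat in H1.
  have H2 := np_lin ler01 (lexx 0) Hb1 (proj1 Hv1); rewrite /= mul1r mul0r addr0 ler_nat in H2.
  by apply/eqP; rewrite eqn_leq H1 H2.
subst gamma.
have Hd : (y0%:R : R) <= d%:R.
  have := np_face ler01 (lexx 0) Hb1 Hf1 (proj1 Hv1); rewrite /= mul1r mul0r addr0 mul0r add0r mul1r.
  by apply.
have Ed : d = y0.
  have := vertex_le Hv1 (np_quad Hquad0) (lexx _) Hd; case=> /eqP; by rewrite eqr_nat => /eqP.
subst d.
have Hm2 : (m2 < y0)%N.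
  rewrite ltnNge; apply/negP => Hle.
  have := vertex_le Hv2 (np_quad Hquad0); rewrite /= !ler_nat (ltnW Hlt) Hle.
  move=> /(_ isT isT) [/eqP]; rewrite eqr_nat => /eqP E; by rewrite E ltnn in Hlt.
split=> //.
set A := (y0 - m2)%N; set B := (n2 - x0)%N.
have HA : (y0%:R - m2%:R : R) = A%:R by rewrite natrB // ltnW.
have HB : (n2%:R - x0%:R : R) = B%:R by rewrite natrB // ltnW.
have HA0 : (0 < A)%N by rewrite subn_gt0.
have HB0 : (0 < B)%N by rewrite subn_gt0.
have HA0r : (0 : R) < A%:R by rewrite ltr0n.
have HB0r : (0 : R) < B%:R by rewrite ltr0n.
rewrite HA HB.
have [v0 [[i2 [j2 [Hq2 Ev2]]] Hv0m]] := ex_min (P := fun v => exists i j, q i j != 0 /\ (A * i + B * j)%N = v)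
  (ex_intro _ _ (ex_intro _ x0 (ex_intro _ y0 (conj Hy0 erefl)))).
have [xs [[js [Hqs Evs]] Hism]] := ex_min (P := fun i => exists j, q i j != 0 /\ (A * i + B * j)%N = v0)
  (ex_intro _ i2 (ex_intro _ j2 (conj Hq2 Ev2))).
have Hb2 : forall i j, q i j != 0 -> (v0%:R : R) <= A%:R * i%:R + B%:R * j%:R.
  move=> i j H; rewrite -!natrM -natrD ler_nat; apply: Hv0m; by exists i, j.
have Hf2 : forall Q : R * R, quadrants q Q -> A%:R * Q.1 + B%:R * Q.2 = v0%:R ->
     (xs%:R : R) <= 1 * Q.1 + 0 * Q.2.
  move=> [x y] [i [j [Hij [/= Hx Hy]]]] /= E; rewrite mul1r mul0r addr0.
  have := Hb2 _ _ Hij => Hm.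
  have Exi : x = i%:R by nra.
  have Eyj : y = j%:R by nra.
  rewrite Exi ler_nat; apply: Hism; exists j; split=> //.
  apply/eqP; rewrite -(eqr_nat R) natrD !natrM -Exi -Eyj E //.
have Hquads : quadrants q (xs%:R, js%:R) by exists xs, js.
have Hvs : np_vertex q (xs%:R, js%:R).
  apply: (vertex_lex (a' := 1) (b' := 0)) Hb2 Hf2 (np_quad Hquads) _ _ => //=.
  - rewrite mulr0 mul1r sub0r oppr_eq0; exact: lt0r_neq0.
  - by rewrite -!natrM -natrD Evs.
  - by rewrite mul1r mul0r addr0.
suff Hkey : (A%:R * x0%:R + B%:R * y0%:R : R) <= v0%:R.
  move=> i j H; apply: le_trans Hkey (Hb2 _ _ H).
have Hid : (A%:R * x0%:R + B%:R * y0%:R : R) = A%:R * n2%:R + B%:R * m2%:R.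
  rewrite -HA -HB; ring.
case: (boolP ((xs == x0) && (js == y0))) => [/andP[/eqP Ei /eqP Ej]|Hne].
  by rewrite -Ei -Ej -!natrM -natrD Evs.
have Hn2 : (n2%:R : R) <= xs%:R.
  apply: (Hmin2 _ Hvs) => [[/eqP E1 /eqP E2]]; move: Hne; rewrite -(eqr_nat R) E1 -(eqr_nat R js) E2.
  by [].
rewrite leNgt; apply/negP => Hv0lt.
have Hx0n2 : (x0%:R : R) < n2%:R by rewrite ltr_nat.
set s := (xs%:R - n2%:R) / (xs%:R - x0%:R : R).
have Hden : (0 : R) < xs%:R - x0%:R by lra.
have Hs0 : 0 <= s by apply: divr_ge0; lra.
have Hs1 : 1 - s = (n2%:R - x0%:R) / (xs%:R - x0%:R) by rewrite /s; field; lra.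
have Hs1p : 0 < 1 - s by rewrite Hs1; apply: divr_gt0; lra.
have HQ := np_two Hquad0 Hquads (s := s) ltac:(apply/andP; split; lra).
rewrite /= in HQ.
set Q1 := s * x0%:R + (1 - s) * xs%:R in HQ.
set Q2 := s * y0%:R + (1 - s) * js%:R in HQ.
have EQ1 : Q1 = n2%:R.
  rewrite /Q1 Hs1 /s; field; lra.
have HLQ : A%:R * Q1 + B%:R * Q2 = s * (A%:R * x0%:R + B%:R * y0%:R) + (1 - s) * v0%:R.
  rewrite /Q1 /Q2 -Evs natrD !natrM; ring.
have HQ2 : Q2 < m2%:R.
  have : (1 - s) * v0%:R < (1 - s) * (A%:R * x0%:R + B%:R * y0%:R) by rewrite ltr_pM2l.
  rewrite EQ1 in HLQ; nra.
have := vertex_le Hv2 HQ; rewrite /= -EQ1 lexx => /(_ isT (ltW HQ2)) /(congr1 snd) /= E2.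
by move: HQ2; rewrite -E2 ltxx.
Qed.

Lemma gamma_n0 g de d : gamma_n g de d 0 = 0%N.
Proof. by rewrite /gamma_n big_ord0 muln0. Qed.

Lemma gamma_nS g de d n : gamma_n g de d n.+1 = (g * de ^ n + d * gamma_n g de d n)%N.
Proof.
rewrite /gamma_n big_ord_recl /= subn0 expn0 muln1 mulnDr; congr (_ + _)%N.
rewrite mulnCA [(d * _)%N]big_distrr !big_distrr /=; apply: eq_bigr => i _.
rewrite /bump /= add1n expnS.
have -> : (n - i.+1 = n.-1 - i)%N by lia.
by rewrite [(d * (_ * _))%N]mulnCA.
Qed.

Lemma comp2_nz (R : realType) (g : ser2 R) u v a b : comp2 g u v a b != 0 ->
  exists i j, g i j != 0 /\ mul2 (@pow2 R (lift1 u) i) (@pow2 R v j) a b != 0.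
Proof.
move=> /sum_neq0 [i /sum_neq0 [j /prod_neq0 [H1 H2]]]; by exists i, j.
Qed.

Section Main.
Variables (R : realType) (p : ser1 R) (q : ser2 R) (delta gamma d : nat) (A B : R).
Hypotheses (Hdel : (1 <= delta)%N) (Hpd : p delta != 0)
  (Hp0 : forall i, (i < delta)%N -> p i = 0)
  (Hqgd : q gamma d != 0) (Hd1 : (0 < d)%N)
  (Hsupp1 : forall i j, q i j != 0 -> (gamma <= i)%N)
  (HA : 0 < A) (HB : 0 < B)
  (Hsupp2 : forall i j, q i j != 0 ->
     A * gamma%:R + B * d%:R <= A * i%:R + B * j%:R)
  (HK : A * gamma%:R <= B * (delta%:R - d%:R)).

Lemma G3 (e W : R) i j : 0 < e -> 0 < W -> A * W <= B * e -> q i j != 0 ->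
  e * gamma%:R + W * d%:R <= e * i%:R + W * j%:R.
Proof.
move=> He HW HAW Hq.
have Hi : (gamma%:R : R) <= i%:R by rewrite ler_nat; exact: Hsupp1 Hq.
have H2 := Hsupp2 Hq.
case: (leqP d j) => Hdj.
  have Hdj' : (d%:R : R) <= j%:R by rewrite ler_nat.
  have h1 : 0 <= e * (i%:R - gamma%:R) by apply: mulr_ge0; lra.
  have h2 : 0 <= W * (j%:R - d%:R) by apply: mulr_ge0; lra.
  lra.
have Hdj' : (j%:R : R) < d%:R by rewrite ltr_nat.
have h1 : 0 <= (B * e - A * W) * (d%:R - j%:R) by apply: mulr_ge0; lra.
have h2 : 0 <= e * (A * i%:R + B * j%:R - (A * gamma%:R + B * d%:R)) by apply: mulr_ge0; lra.
have h3 : 0 <= A * (e * i%:R + W * j%:R - (e * gamma%:R + W * d%:R)).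
  have -> : A * (e * i%:R + W * j%:R - (e * gamma%:R + W * d%:R)) =
    e * (A * i%:R + B * j%:R - (A * gamma%:R + B * d%:R)) + (B * e - A * W) * (d%:R - j%:R) by ring.
  lra.
rewrite pmulr_rge0 // in h3; lra.
Qed.

Lemma G4 (e W : R) i j : 0 < e -> 0 < W -> A * W < B * e -> q i j != 0 ->
  (i != gamma) || (j != d) ->
  e * gamma%:R + W * d%:R < e * i%:R + W * j%:R.
Proof.
move=> He HW HAW Hq Hne.
have Hi : (gamma <= i)%N by exact: Hsupp1 Hq.
have H2 := Hsupp2 Hq.
case: (leqP d j) => Hdj.
  case: (ltnP gamma i) => Hgi.
    have Hgi' : (gamma%:R : R) < i%:R by rewrite ltr_nat.
    have Hdj' : (d%:R : R) <= j%:R by rewrite ler_nat.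
    have h1 : 0 < e * (i%:R - gamma%:R) by apply: mulr_gt0; lra.
    have h2 : 0 <= W * (j%:R - d%:R) by apply: mulr_ge0; lra.
    lra.
  have Eg : i = gamma by apply/eqP; rewrite eqn_leq Hgi Hi.
  move: Hne; rewrite Eg eqxx /= => Hjd.
  have Hdj' : (d%:R : R) < j%:R by rewrite ltr_nat ltn_neqAle eq_sym Hjd Hdj.
  have h2 : 0 < W * (j%:R - d%:R) by apply: mulr_gt0; lra.
  lra.
have Hi' : (gamma%:R : R) <= i%:R by rewrite ler_nat.
have Hdj' : (j%:R : R) < d%:R by rewrite ltr_nat.
have h1 : 0 < (B * e - A * W) * (d%:R - j%:R) by apply: mulr_gt0; lra.
have h2 : 0 <= e * (A * i%:R + B * j%:R - (A * gamma%:R + B * d%:R)) by apply: mulr_ge0; lra.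
have h3 : 0 < A * (e * i%:R + W * j%:R - (e * gamma%:R + W * d%:R)).
  have -> : A * (e * i%:R + W * j%:R - (e * gamma%:R + W * d%:R)) =
    e * (A * i%:R + B * j%:R - (A * gamma%:R + B * d%:R)) + (B * e - A * W) * (d%:R - j%:R) by ring.
  lra.
rewrite pmulr_rgt0 // in h3; lra.
Qed.

Definition l0 := B / (A *+ 2).

Lemma l0_pos : 0 < l0.
Proof. rewrite /l0; apply: divr_gt0 => //; by rewrite pmulrn_rgt0. Qed.

Lemma main_ind n :
 [/\ (forall i, (i < delta ^ n)%N -> piter p n i = 0), piter p n (delta ^ n)%N != 0,
  lead l0 (gamma_n gamma delta d n) (d ^ n)%N (Qiter p q n),
  A * ((gamma_n gamma delta d n)%:R + l0 * (d ^ n)%:R) < B * (delta ^ n)%:R &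
  forall l, 0 < l -> A * l <= B ->
    bnd l ((gamma_n gamma delta d n)%:R + l * (d ^ n)%:R) (Qiter p q n) /\
    A * ((gamma_n gamma delta d n)%:R + l * (d ^ n)%:R) <= B * (delta ^ n)%:R].
Proof.
have Hl0 := l0_pos.
elim: n => [|n [IHp0 IHp1 IHl IHi IHb]].
  rewrite gamma_n0 !expn0; split.
  - by move=> i; rewrite ltnS leqn0 => /eqP ->.
  - by rewrite /= oner_neq0.
  - split; first by rewrite /= oner_neq0.
    move=> i j /=; case: andP => [[/eqP -> /eqP ->]|]; first by rewrite !eqxx.
    by rewrite eqxx.
  - have : A * l0 * 2 = B by rewrite /l0; field; exact: lt0r_neq0.
    rewrite add0r !mulr1 => E; have : 0 < A * l0 by apply: mulr_gt0. lra.
  - move=> l Hl HlA; split; last by rewrite add0r !mulr1.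
    move=> i j /=; case: andP => [[/eqP -> /eqP ->]|]; first by rewrite /wt.
    by rewrite eqxx.
set e := (delta ^ n)%N; set G := gamma_n gamma delta d n; set D := (d ^ n)%N.
rewrite gamma_nS expnS [(d ^ n.+1)%N]expnS -/e -/G -/D.
rewrite -/e -/G -/D in IHp0 IHp1 IHl IHi IHb.
have He0 : (0 < e)%N by rewrite expn_gt0 Hdel.
have HD0 : (0 < D)%N by rewrite expn_gt0 Hd1.
have He : (0 : R) < e%:R by rewrite ltr0n.
have HD : (0 : R) < D%:R by rewrite ltr0n.
have HG : (0 : R) <= G%:R by []. clearbody G.
set U := lift1 (piter p n).
have HU : forall l, lead l e 0 U by move=> l; apply: lead_lift1.
change (piter p n.+1) with (comp1 p (piter p n)).
change (Qiter p q n.+1) with (comp2 q (piter p n) (Qiter p q n)).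
split.
- move=> i Hi; rewrite /comp1 big1 // => k _.
  case: (ltnP k delta) => Hk; first by rewrite Hp0 // mul0r.
  case: (eqVneq (pow2 U k i 0) 0) => [->|Hnz]; first by rewrite mulr0.
  have := bnd_pow (k := k) (lead_bnd (HU 0)) Hnz; rewrite /wt !mul0r !addr0 -natrM ler_nat => Hle.
  have := leq_mul Hk (leqnn e); move=> H; have := leq_trans H Hle; by rewrite leqNgt Hi.
- rewrite /comp1 (sum1 (i0 := delta) (F := fun k => p k * pow2 U k (delta * e)%N 0)).
  + apply: mulf_neq0 => //; have := (lead_pow delta (HU 0)).1; by rewrite muln0.
  + by rewrite ltnS leq_pmulr.
  + move=> k Hk Hne; case: (ltnP k delta) => Hkd; first by rewrite Hp0 // mul0r.
    case: (eqVneq (pow2 U k (delta * e)%N 0) 0) => [->|Hnz]; first by rewrite mulr0.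
    have := bnd_pow (k := k) (lead_bnd (HU 0)) Hnz; rewrite /wt !mul0r !addr0 -!natrM ler_nat.
    rewrite leq_pmul2r // => Hle; exfalso; move/negP: Hne; apply; by rewrite eqn_leq Hle Hkd.
- set W0 := G%:R + l0 * D%:R.
  have HW0 : 0 < W0 by rewrite /W0; have := mulr_gt0 Hl0 HD; lra.
  set T := fun i j => mul2 (pow2 U i) (pow2 (Qiter p q n) j).
  have HT : forall i j, lead l0 (i * e + j * G) (i * 0 + j * D) (T i j).
    move=> i j; rewrite /T; apply: lead_mul; first by apply: (lead_pow i (HU l0)). by apply: (lead_pow j IHl).
  have HTw : forall i j, wt l0 (i * e + j * G) (i * 0 + j * D) = e%:R * i%:R + W0 * j%:R.
    by move=> i j; rewrite /wt /W0 !natrD !natrM; ring.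
  have Htw : wt l0 (gamma * e + d * G) (d * D) = e%:R * gamma%:R + W0 * d%:R.
    by rewrite /wt /W0 !natrD !natrM; ring.
  have Hkey : forall i j, q i j != 0 -> (i != gamma) || (j != d) ->
      wt l0 (gamma * e + d * G) (d * D) < e%:R * i%:R + W0 * j%:R.
    by move=> i j Hq Hne; rewrite Htw; apply: G4.
  have HTg : lead l0 (gamma * e + d * G) (d * D) (T gamma d).
    by have := HT gamma d; rewrite muln0 add0n [(gamma * e)%N]mulnC.
  split.
  + rewrite /comp2 (dsum1 (i0 := gamma) (j0 := d)
       (F := fun i j => q i j * T i j (gamma * e + d * G)%N (d * D)%N)).
    * by apply: mulf_neq0 => //; case: HTg.
    * have := leq_pmulr gamma He0; lia.
    * have := leq_pmulr d HD0; lia.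
    * move=> i j _ _ Hne.
      case: (eqVneq (q i j) 0) => [->|Hq]; first by rewrite mul0r.
      case: (eqVneq (T i j (gamma * e + d * G)%N (d * D)%N) 0) => [->|HTn]; first by rewrite mulr0.
      have := lead_bnd (HT i j) HTn; rewrite HTw => H1.
      have := Hkey i j Hq Hne => H2; exfalso; lra.
  + move=> a b /comp2_nz [i [j [Hq HTn]]] Hne.
    case: (boolP ((i != gamma) || (j != d))) => Hij.
      have := lead_bnd (HT i j) HTn; rewrite HTw => H1.
      have := Hkey i j Hq Hij => H2; lra.
    move: Hij; rewrite negb_or !negbK => /andP[/eqP Ei /eqP Ej].
    rewrite Ei Ej in HTn; exact: (proj2 HTg) _ _ HTn Hne.
- have h1 : A * gamma%:R * e%:R <= B * (delta%:R - d%:R) * e%:R by rewrite ler_pM2r.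
  have Hd : (0 : R) < d%:R by rewrite ltr0n.
  have h2 : d%:R * (A * (G%:R + l0 * D%:R)) < d%:R * (B * e%:R) by rewrite ltr_pM2l.
  rewrite !natrD !natrM; lra.
- move=> l Hl HlA; have [IHb1 IHb2] := IHb l Hl HlA.
  set W := G%:R + l * D%:R.
  have HW : 0 < W by rewrite /W; have := mulr_gt0 Hl HD; lra.
  split.
  + move=> a b /comp2_nz [i [j [Hq HTn]]].
    have := bnd_mul (bnd_pow (k := i) (lead_bnd (HU l))) (bnd_pow (k := j) IHb1) HTn.
    have := G3 He HW IHb2 Hq.
    rewrite /wt /W !natrD !natrM mulr0 addr0; lra.
  + have h1 : A * gamma%:R * e%:R <= B * (delta%:R - d%:R) * e%:R by rewrite ler_pM2r.
    have Hd : (0 : R) <= d%:R by [].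
    have h2 : d%:R * (A * (G%:R + l * D%:R)) <= d%:R * (B * e%:R) by rewrite ler_wpM2l.
    rewrite !natrD !natrM; lra.
Qed.
End Main.

Unset Implicit Arguments. Set Strict Implicit. Set Printing Implicit Defensive.

Theorem theorem5p1 (R : realType) (p : ser1 R) (q : ser2 R) (delta : nat)
  (gamma d n2 m2 : nat) :
  (* p(z) = a_delta z^delta + O(z^(delta+1)), a_delta <> 0, delta >= 1 *)
  (1 <= delta)%N -> p delta != 0 -> (forall i, (i < delta)%N -> p i = 0) ->
  (* q(0,0) = 0, q not identically zero *)
  q 0%N 0%N = 0 -> (exists i j, q i j != 0) ->
  (* f is a holomorphic germ *)
  holo1 p -> holo2 q ->
  (* Case 3: (gamma,d) = (n_1,m_1) is the vertex of N(q) with least abscissa,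
     (n2,m2) = (n_2,m_2) is the next vertex (so s > 1), and T_1 <= delta *)
  np_vertex q (gamma%:R, d%:R) ->
  (forall P, np_vertex q P -> gamma%:R <= P.1) ->
  np_vertex q (n2%:R, m2%:R) -> (gamma < n2)%N ->
  (forall P, np_vertex q P -> P <> (gamma%:R, d%:R) -> n2%:R <= P.1) ->
  d%:R + gamma%:R * (d%:R - m2%:R) / (n2%:R - gamma%:R) <= delta%:R :> R ->
  let l2 : R := (n2%:R - gamma%:R) / (d%:R - m2%:R) in
  let alpha : R := gamma%:R / (delta%:R - d%:R) in
  forall n : nat, (1 <= n)%N ->
    Qiter p q n (gamma_n gamma delta d n) (d ^ n)%N != 0 /\
    forall l : R,
      (if (0 < gamma)%N then alpha <= l <= l2 else 0 < l <= l2) ->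
      wl_is (Qiter p q n) l ((gamma_n gamma delta d n)%:R + l * (d ^ n)%:R) /\
      wl_is (monom R (gamma_n gamma delta d n) (d ^ n)%N) l
            ((gamma_n gamma delta d n)%:R + l * (d ^ n)%:R).
Proof.
move=> Hdel Hpd Hp0 _ Hex _ _ Hv1 Hmin1 Hv2 Hlt Hmin2 HT1 l2 alpha n _.
have [Hqgd Hm2 Hs1 Hs2] := geom Hex Hv1 Hmin1 Hv2 Hlt Hmin2.
have HA : (0 : R) < d%:R - m2%:R by rewrite subr_gt0 ltr_nat.
have HB : (0 : R) < n2%:R - gamma%:R by rewrite subr_gt0 ltr_nat.
have Hd1 : (0 < d)%N by apply: leq_ltn_trans Hm2.
have HK : (d%:R - m2%:R) * gamma%:R <= (n2%:R - gamma%:R) * (delta%:R - d%:R) :> R.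
  move: HT1; set X := gamma%:R * (d%:R - m2%:R) / (n2%:R - gamma%:R) => HT1.
  have : X <= delta%:R - d%:R :> R by lra.
  rewrite /X ler_pdivrMr // => H; lra.
have [_ _ Hlead _ Hbnd] := main_ind Hdel Hpd Hp0 Hqgd Hd1 Hs1 HA HB Hs2 HK n.
split; first by case: Hlead.
move=> l Hl.
have [Hl0 HlA] : 0 < l /\ (d%:R - m2%:R) * l <= n2%:R - gamma%:R.
  have Hll2 : l <= l2 by case: (0 < gamma)%N Hl => /andP[].
  split; last by rewrite mulrC -ler_pdivlMr.
  case: (ltnP 0 gamma) Hl => Hg /andP[Hal _]; last by [].
  apply: lt_le_trans Hal; rewrite /alpha; apply: divr_gt0; first by rewrite ltr0n.
  have : 0 < gamma%:R * (d%:R - m2%:R) / (n2%:R - gamma%:R) :> R.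
    by apply: divr_gt0 => //; apply: mulr_gt0 => //; rewrite ltr0n.
  lra.
have [Hb _] := Hbnd l Hl0 HlA.
split; split.
- by exists (gamma_n gamma delta d n), (d ^ n)%N; split=> //; case: Hlead.
- by move=> i j Hij; apply: Hb.
- exists (gamma_n gamma delta d n), (d ^ n)%N; split=> //; by rewrite /monom !eqxx oner_neq0.
- move=> i j; rewrite /monom; case: (i =P _) => [->|]; case: (j =P _) => [->|] //=;
  by rewrite eqxx.
Qed.
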